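(* For integers $n,m\ge 0$, the number of lattice paths from $(0,0)$ to $(2n+m,m)$ with steps $(1,1),(1,-1),(2,0)$ that never go below the $x$-axis equals $$\sum_{p=0}^{n}\left(\binom{2n-2p+m}{n-p}-\binom{2n-2p+m}{n-p-1}\right)\binom{2n+m-p}{p}.$$
   Context: Binomial coefficients $\binom{a}{b}$ with $b<0$ are $0$. *)

(* Defs.v *)
From HB Require Import structures.
From mathcomp Require Import all_boot all_order all_algebra.
Set Implicit Arguments. Unset Strict Implicit. Unset Printing Implicit Defensive.
Import Order.TTheory GRing.Theory Num.Theory.
Local Open Scope ring_scope.

Inductive step := U | D | H.
Definition step_eqb (a b : step) : bool :=
  match a, b with U, U | D, D | H, H => true | _, _ => false end.
Lemma step_eqP : Equality.axiom step_eqb.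
Proof. by case; case; constructor. Qed.
HB.instance Definition _ := hasDecEq.Build step step_eqP.

Definition xstep (s : step) : nat := match s with U => 1 | D => 1 | H => 2 end.
Definition ystep (s : step) : int := match s with U => 1 | D => -1 | H => 0 end.

(* A lattice path starting at (0,0) is a finite sequence of steps. *)
Definition xend (w : seq step) : nat := (\sum_(s <- w) xstep s)%N.
Definition height (w : seq step) (k : nat) : int := \sum_(s <- take k w) ystep s.

Definition good_path (x : nat) (y : int) (w : seq step) : Prop :=
  xend w = x /\ height w (size w) = y /\ (forall k, (k <= size w)%N -> 0 <= height w k).

Definition binZ (a : nat) (b : int) : int :=
  if b < 0 then 0 else ('C(a, `|b|%N))%:Z.

(* Main.v *)
Require Import Defs.
From mathcomp Require Import all_boot all_order all_algebra.
From mathcomp Require Import zify ring.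
Import Order.TTheory GRing.Theory Num.Theory.

Fixpoint okp (y h : nat) (w : seq step) : bool :=
  match w with
  | [::] => h == y
  | U :: w' => okp y h.+1 w'
  | D :: w' => (0 < h) && okp y h.-1 w'
  | H :: w' => okp y h w'
  end.

Fixpoint W (k : nat) : seq (seq step) :=
  if k is k'.+1 then [seq U :: w | w <- W k'] ++ [seq D :: w | w <- W k'] ++ [seq H :: w | w <- W k']
  else [:: [::]].

Lemma mem_cons_map (x y : step) w S : (x :: w \in [seq y :: v | v <- S]) = (x == y) && (w \in S).
Proof.
apply/mapP/andP => [[v Hv [-> ->]]|[/eqP -> Hw]]; last by exists w.
by split.
Qed.

Lemma nil_map (y : step) S : ([::] \in [seq y :: v | v <- S]) = false.
Proof. by apply/mapP => -[]. Qed.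

Lemma mem_W k w : (w \in W k) = (size w == k).
Proof.
elim: k w => [|k IH] [|s w] //=.
  by rewrite !mem_cat !nil_map.
rewrite !mem_cat !mem_cons_map IH.
by case: s => /=; rewrite ?orbF eqSS.
Qed.

Lemma W_uniq k : uniq (W k).
Proof.
elim: k => [|k IH] //=.
rewrite !cat_uniq !map_inj_uniq //; try by move=> a b [].
rewrite IH /= has_cat !has_map.
rewrite andbT negb_or.
by repeat (apply/andP; split); apply/hasPn => v _ /=; rewrite mem_cons_map.
Qed.

Lemma count_W k (P : pred (seq step)) : count P (W k.+1) =
  (count (fun w => P (U::w)) (W k) + count (fun w => P (D::w)) (W k) + count (fun w => P (H::w)) (W k))%N.
Proof. by rewrite /= !count_cat !count_map addnA. Qed.

Fixpoint Bal (y k h : nat) : nat :=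
  if k is k'.+1 then (Bal y k' h.+1 + (if h is h'.+1 then Bal y k' h' else 0))%N else (h == y : nat).

Lemma countG y L h q :
  count (fun w => okp y h w && (count_mem H w == q)) (W L) = (Bal y (L - q) h * 'C(L, q))%N.
Proof.
elim: L h q => [|L IH] h q.
  by case: q => [|q] /=; rewrite ?sub0n ?bin0 ?muln1 ?bin0n ?muln0 ?andbT ?andbF ?addn0.
rewrite count_W /=.
have -> : count (fun w => okp y h.+1 w && (0 + count_mem H w == q)) (W L) = (Bal y (L-q) h.+1 * 'C(L,q))%N by exact: IH.
have -> : count (fun w => (0 < h) && okp y h.-1 w && (0 + count_mem H w == q)) (W L) =
   ((if h is h'.+1 then Bal y (L-q) h' else 0) * 'C(L,q))%N.
  case: h => [|h]; last by exact: IH.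
  by rewrite (@eq_count _ _ pred0) ?count_pred0 ?mul0n.
have -> : count (fun w => okp y h w && (1 + count_mem H w == q)) (W L) =
   (if q is q'.+1 then Bal y (L-q') h * 'C(L,q') else 0)%N.
  case: q => [|q]; last by exact: IH.
  have E : (fun w => okp y h w && (1 + count_mem H w == 0)) =1 pred0 by move=> w; rewrite andbF.
  by rewrite (eq_count E) count_pred0.
case: q => [|q].
  by rewrite !subn0 !bin0 /= !muln1 addn0.
rewrite subSS.
case: (ltngtP q L) => hq.
- rewrite binS -(subnSK hq) /=; ring.
- by rewrite !bin_small ?muln0 // ltnS ltnW.
- by rewrite hq subnn !binn bin_small ?muln0.
Qed.


Local Open Scope ring_scope.
Fixpoint Nf (k : nat) (t : int) : int :=
  if k is k'.+1 then (Nf k' (t - 1) + Nf k' (t + 1))%R else ((t == 0) : nat)%:Z.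

Lemma Nf_big k (t : int) : (k%:Z < t)%R -> Nf k t = 0%R.
Proof.
elim: k t => [|k IH] t ht /=.
  by have -> : (t == 0) = false by apply/negbTE/eqP; lia.
by rewrite !IH //; lia.
Qed.

Lemma Nf_bin k j : Nf k (k%:Z - 2 * j%:Z)%R = ('C(k, j))%:Z.
Proof.
elim: k j => [|k IH] j /=.
  by case: j => [|j] //=; have -> : ((0 - 2 * (j.+1)%:Z)%R == 0) = false by apply/negbTE/eqP; lia.
case: j => [|j].
  have -> : ((k.+1)%:Z - 2 * 0%:Z - 1 = k%:Z - 2 * 0%:Z)%R by lia.
  by rewrite IH Nf_big ?bin0 ?addr0 //; lia.
have -> : ((k.+1)%:Z - 2 * (j.+1)%:Z - 1 = k%:Z - 2 * (j.+1)%:Z)%R by lia.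
have -> : ((k.+1)%:Z - 2 * (j.+1)%:Z + 1 = k%:Z - 2 * j%:Z)%R by lia.
by rewrite !IH binS PoszD addrC.
Qed.

Lemma Bal_Nf y k h : (Bal y k h)%:Z = (Nf k (y%:Z - h%:Z) - Nf k (y%:Z + h%:Z + 2))%R.
Proof.
elim: k h => [|k IH] h /=.
  have -> : ((y%:Z + h%:Z + 2)%R == 0) = false by apply/negbTE/eqP; lia.
  by rewrite subr_eq0 eqz_nat eq_sym subr0.
rewrite PoszD IH.
case: h => [|h].
  rewrite addr0.
  have -> : (y%:Z - 0%:Z - 1 = y%:Z - 1)%R by lia.
  have -> : (y%:Z - 0%:Z + 1 = y%:Z + 1)%R by lia.
  have -> : (y%:Z + 0%:Z + 2 - 1 = y%:Z + 1)%R by lia.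
  have -> : (y%:Z + 0%:Z + 2 + 1 = y%:Z + (1%N)%:Z + 2)%R by lia.
  have -> : (y%:Z - (1%N)%:Z = y%:Z - 1)%R by lia.
  ring.
rewrite IH.
have -> : (y%:Z - (h.+1)%:Z - 1 = y%:Z - (h.+2)%:Z)%R by lia.
have -> : (y%:Z - (h.+1)%:Z + 1 = y%:Z - h%:Z)%R by lia.
have -> : (y%:Z + (h.+1)%:Z + 2 - 1 = y%:Z + h%:Z + 2)%R by lia.
have -> : (y%:Z + (h.+1)%:Z + 2 + 1 = y%:Z + (h.+2)%:Z + 2)%R by lia.
ring.
Qed.

Lemma height0 w : height w 0 = 0.
Proof. by rewrite /height take0 big_nil. Qed.

Lemma height_cons s w k : height (s :: w) k.+1 = ystep s + height w k.
Proof. by rewrite /height /= big_cons. Qed.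

Lemma okp_height y h w : okp y h w <->
  (h%:Z + height w (size w) = y%:Z /\ forall k, (k <= size w)%N -> 0 <= h%:Z + height w k).
Proof.
elim: w h => [|s w IH] h /=.
  split.
    move/eqP => ->; split; first by rewrite height0 addr0.
    by move=> k; rewrite leqn0 => /eqP ->; rewrite height0 addr0.
  by case; rewrite height0 addr0 => /eqP; rewrite eqz_nat.
case: s => /=.
- rewrite IH; split => -[E F]; split.
  + by rewrite height_cons /=; lia.
  + case => [|k] Hk; first by rewrite height0 addr0.
    by rewrite height_cons /=; have := F k Hk; lia.
  + by move: E; rewrite height_cons /=; lia.
  + by move=> k Hk; have := F k.+1 Hk; rewrite height_cons /=; lia.
- split.
  + case/andP => hp /IH [E F]; split.
      by rewrite height_cons /=; lia.
    case => [|k] Hk; first by rewrite height0 addr0.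
    by rewrite height_cons /=; have := F k Hk; lia.
  + case => E F.
    have h0 := F 1%N isT; rewrite height_cons height0 /= in h0.
    have hp : (0 < h)%N by lia.
    apply/andP; split => //; apply/IH; split.
      by move: E; rewrite height_cons /=; lia.
    by move=> k Hk; have := F k.+1 Hk; rewrite height_cons /=; lia.
- rewrite IH; split => -[E F]; split.
  + by rewrite height_cons /=; lia.
  + case => [|k] Hk; first by rewrite height0 addr0.
    by rewrite height_cons /=; have := F k Hk; lia.
  + by move: E; rewrite height_cons /=; lia.
  + by move=> k Hk; have := F k.+1 Hk; rewrite height_cons /=; lia.
Qed.

Lemma xendE w : xend w = (size w + count_mem H w)%N.
Proof.
elim: w => [|s w IH]; first by rewrite /xend big_nil.
rewrite /xend big_cons -/(xend w) IH /=.
by case: s => /=; lia.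
Qed.

Lemma okp_bound y h w : okp y h w -> (y + count_mem H w <= h + size w)%N.
Proof.
elim: w h => [|s w IH] h /=; first by move/eqP => ->; rewrite addn0.
case: s => /=.
- by move/IH; rewrite add0n addnS -addSn.
- case/andP => hp /IH h1; rewrite add0n; apply: (leq_trans h1).
  by rewrite leq_add ?leq_pred ?leqnSn.
- by move/IH; rewrite add1n !addnS ltnS.
Qed.

Lemma Bal_val m d : (Bal m (2 * d + m) 0)%:Z =
  binZ (2 * d + m) d%:Z - binZ (2 * d + m) (d%:Z - 1).
Proof.
rewrite Bal_Nf.
have -> : m%:Z - 0%:Z = (2 * d + m)%N%:Z - 2 * d%:Z by lia.
rewrite Nf_bin /binZ.
have -> : (d%:Z < 0) = false by [] .
case: d => [|d].
  rewrite Nf_big; last by lia.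
  by rewrite subr0.
have -> : (d.+1)%:Z - 1 = d%:Z by lia.
have -> : (d%:Z < 0) = false by [] .
have -> : (2 * d.+1 + m)%N%:Z - 2 * (d.+1)%:Z + 2 = (2 * d.+1 + m)%N%:Z - 2 * d%:Z by lia.
by rewrite Nf_bin.
Qed.

Theorem lemma3p8 (n m : nat) :
  exists L : seq (seq step),
    uniq L /\
    (forall w, w \in L <-> good_path (2 * n + m)%N (m%:Z) w) /\
    (size L)%:Z =
      \sum_(0 <= p < n.+1)
        ((binZ (2 * n - 2 * p + m)%N ((n - p)%N%:Z)
          - binZ (2 * n - 2 * p + m)%N ((n - p)%N%:Z - 1))
         * ('C(2 * n + m - p, p))%:Z).
Proof.
pose Wp p := [seq w <- W (2 * n + m - p) | okp m 0 w && (count_mem H w == p)].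
exists (flatten [seq Wp p | p <- iota 0 n.+1]).
have good_iff : forall w, good_path (2 * n + m) m%:Z w <-> (xend w = (2 * n + m)%N /\ okp m 0 w).
  move=> w; rewrite /good_path okp_height.
  split => [[-> [E F]]|[-> [E F]]]; split => //; split.
  - by rewrite add0r.
  - by move=> k hk; rewrite add0r; apply: F.
  - by rewrite add0r in E.
  - by move=> k hk; have := F k hk; rewrite add0r.
have memWp : forall p w, (w \in Wp p) =
   (okp m 0 w && (count_mem H w == p)) && (size w == 2 * n + m - p)%N.
  by move=> p w; rewrite mem_filter mem_W.
split.
  have : forall s, uniq s -> uniq (flatten [seq Wp p | p <- s]).
    elim => //= p s IH /andP[ps us].
    rewrite cat_uniq IH // filter_uniq ?W_uniq //= andbT.
    apply/hasPn => w /flattenP [t /mapP [q qs ->]].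
    rewrite !memWp => /andP[/andP[_ /eqP cq] _].
    apply/negP => /andP[/andP[_ /eqP cp] _].
    by move: ps; rewrite -cp cq qs.
  by apply; exact: iota_uniq.
split.
  move=> w; rewrite good_iff; split.
    case/flattenP => t /mapP [p]; rewrite mem_iota => /andP[_ hp] ->.
    rewrite memWp => /andP[/andP[ok /eqP cp] /eqP sz]; split => //.
    rewrite xendE sz cp subnK //; lia.
  case=> xe ok; have b := @okp_bound m 0 w ok; rewrite xendE in xe.
  apply/flattenP; exists (Wp (count_mem H w)).
    apply/mapP; exists (count_mem H w) => //; rewrite mem_iota /=.
    move: (count_mem H w) (size w) b xe => c sz b xe; lia.
  rewrite memWp ok eqxx /=; apply/eqP.
  move: (count_mem H w) (size w) b xe => c sz b xe; lia.
rewrite size_flatten /shape -map_comp sumnE big_map.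
rewrite (big_morph Posz PoszD (erefl 0%:Z)) /index_iota subn0.
apply: eq_big_seq => p; rewrite mem_iota => /andP[_ hp] /=.
rewrite size_filter countG PoszM.
have -> : (2 * n + m - p - p = 2 * (n - p) + m)%N by lia.
have -> : (2 * n - 2 * p + m = 2 * (n - p) + m)%N by lia.
by rewrite Bal_val.
Qed.
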